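(* Let $p$ be a prime, $n \ge 2$, and $G$ a group of order $p^n$ and exponent $p$. Then $\eta(G) \ge n + p - 1$.
   Context: A cyclic subgroup $C$ of a group $G$ is maximal cyclic if there is no cyclic subgroup $D$ of $G$ with $C < D$. $\eta(G)$ denotes the number of conjugacy classes of maximal cyclic subgroups of $G$. *)

(* Defs.v *)
From HB Require Import structures.
From mathcomp Require Import all_boot all_fingroup all_solvable.
Set Implicit Arguments.
Unset Strict Implicit.
Unset Printing Implicit Defensive.
Local Open Scope group_scope.

Definition max_cyclic {gT : finGroupType} (G C : {group gT}) : bool :=
  [max C | (C \subset G) && cyclic C].

Definition max_cyclics {gT : finGroupType} (G : {group gT}) : {set {group gT}} :=
  [set C : {group gT} | max_cyclic G C].

Definition eta {gT : finGroupType} (G : {group gT}) : nat :=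
  #|[set orbit 'JG%act G C | C in max_cyclics G]|.

(* Main.v *)
Require Import Defs.
From mathcomp Require Import all_boot all_fingroup all_solvable zify.
Set Implicit Arguments. Unset Strict Implicit. Unset Printing Implicit Defensive.
Local Open Scope group_scope.

Lemma cyc_card1p gT (G C : {group gT}) p : prime p -> exponent G %| p ->
  C \subset G -> cyclic C -> #|C| = 1%N \/ #|C| = p.
Proof.
move=> pp eG sCG cC.
have : #|C| %| p by rewrite -exponent_cyclic // (dvdn_trans (exponentS sCG)).
by case/primeP: pp => _ H /H /orP[] /eqP ->; [left|right].
Qed.

Lemma maxcycE gT (G C : {group gT}) p : prime p -> exponent G %| p ->
  G :!=: 1 -> max_cyclic G C = (C \subset G) && (#|C| == p).
Proof.
move=> pp eG ntG; rewrite /max_cyclic; apply/maxgroupP/andP.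
- case=> /andP[sCG cC] maxC; split=> //.
  have [C1|->//] := cyc_card1p pp eG sCG cC.
  have C1' : C = 1%G by apply/val_inj/card1_trivg.
  have [x Gx ntx] := trivgPn _ ntG.
  have := maxC <[x]>%G; rewrite cycle_subG Gx cycle_cyclic C1' sub1G => /(_ isT isT).
  by move/eqP; rewrite cycle_eq1 (negbTE ntx).
- case=> sCG /eqP cardC; split; first by rewrite sCG prime_cyclic // cardC.
  move=> H /andP[sHG cH] sCH; apply/esym/eqP; rewrite eqEcard sCH /=.
  have [H1|->] := cyc_card1p pp eG sHG cH; last by rewrite cardC.
  by rewrite H1 cardC ltnW // prime_gt1.
Qed.
Lemma eta_base gT (G : {group gT}) p : prime p -> exponent G %| p ->
  #|G| = (p ^ 2)%N -> p.+1 <= eta G.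
Proof.
move=> pp eG cG.
have aG : abelian G by exact: card_p2group_abelian cG.
have ntG : G :!=: 1.
  rewrite trivg_card1 cG; apply/eqP=> h.
  by have := ltn_exp2l 0 2 (prime_gt1 pp); rewrite h expn0.
have E2 : G \in 'E_p^2(G).
  apply/pnElemP; split=> //; first by rewrite abelemE // aG.
  by rewrite cG pfactorK.
have ME : max_cyclics G = 'E_p^1(G).
  by apply/setP=> C; rewrite inE (maxcycE _ pp) // p1ElemE // !inE.
rewrite /eta card_in_imset ME ?(card_p1Elem_p2Elem E2) //.
move=> C D; rewrite -ME !inE => mC mD eCD.
have : D \in orbit 'JG G C by rewrite eCD orbit_refl.
case/imsetP=> g Gg ->; apply/val_inj=> /=.
have nCG : G \subset 'N(C).
  by apply: normal_norm; rewrite -sub_abelian_normal //; move: mC; rewrite (maxcycE _ pp) // => /andP[].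
by rewrite (normsP nCG).
Qed.
Section Quo.
Variables (gT : finGroupType) (G N : {group gT}) (p : nat).
Hypotheses (pp : prime p) (eG : exponent G %| p) (nNG : N <| G) (cN : #|N| = p)
  (ntQ : G / N != 1).

Let eQ : exponent (G / N) %| p := dvdn_trans (exponent_quotient G N) eG.
Let sNG : N \subset G := normal_sub nNG.
Let ntG : G :!=: 1.
Proof. by apply: contraNneq ntQ => ->; rewrite quotient1. Qed.

Definition liftc (K : {group coset_of N}) : {group gT} :=
  cycle_group (repr (repr (K :\ (1 : coset_of N)))).

Lemma liftcP K : K \in max_cyclics (G / N) ->
  liftc K \in max_cyclics G /\ liftc K / N = K.
Proof.
rewrite !inE (maxcycE _ pp) // => /andP[sKQ /eqP cK].
have ntK : K :!=: 1 by rewrite trivg_card1 cK; apply: contraTneq (prime_gt1 pp) => ->.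
have [y Ky nty] := trivgPn _ ntK.
set xb := repr (K :\ (1 : coset_of N)).
have xbK : xb \in K :\ (1 : coset_of N) by apply: (mem_repr y); rewrite !inE nty.
move: xbK; rewrite !inE => /andP[ntxb Kxb].
set x := repr xb.
have Nx : x \in 'N(N) by exact: repr_coset_norm.
have cx : coset N x = xb by exact: coset_reprK.
have Gx : x \in G.
  rewrite -(quotientGK nNG); apply/morphpreP; split; first by [].
  by rewrite /= cx (subsetP sKQ).
have Kq : <[x]> / N = K.
  rewrite quotient_cycle // cx; apply/eqP; rewrite eqEcard cycle_subG Kxb cK /=.
  have Qxb : <[xb]> \subset G / N by rewrite cycle_subG (subsetP sKQ).
  have [/eqP|->//] := cyc_card1p pp eQ Qxb (cycle_cyclic xb).
  by rewrite -trivg_card1 cycle_eq1 (negbTE ntxb).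
split; last exact: Kq.
rewrite /liftc -/xb -/x (maxcycE _ pp) // cycle_subG Gx /=.
have [/eqP|->//] := cyc_card1p pp eG (etrans (cycle_subG x G) Gx) (cycle_cyclic x).
rewrite -trivg_card1 cycle_eq1 => /eqP x1.
by move: ntxb; rewrite -cx x1 morph1 eqxx.
Qed.
End Quo.
Lemma max_orbit gT (H C D : {group gT}) p : prime p -> exponent H %| p ->
  H :!=: 1 -> C \in max_cyclics H -> D \in orbit 'JG H C -> D \in max_cyclics H.
Proof.
move=> pp eH ntH; rewrite !inE !(maxcycE _ pp) // => /andP[sCH /eqP cC].
case/imsetP=> g Hg ->; rewrite /= -{1}(conjGid Hg) conjSg sCH cardJg cC /=.
by rewrite eqxx.
Qed.

Lemma eta_quo gT (G N : {group gT}) p : prime p -> exponent G %| p -> N <| G ->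
  #|N| = p -> G / N != 1 -> eta (G / N) < eta G.
Proof.
move=> pp eG nNG cN ntQ.
have eQ : exponent (G / N) %| p := dvdn_trans (exponent_quotient G N) eG.
have ntG : G :!=: 1 by apply: contraNneq ntQ => ->; rewrite quotient1.
set OB := [set orbit 'JG (G/N) K | K in max_cyclics (G/N)].
set OG := [set orbit 'JG G C | C in max_cyclics G].
pose rep (O : {set {group coset_of N}}) := odflt 1%G [pick K in O].
pose Phi O := orbit 'JG G (liftc (rep O)).
have repP : forall O, O \in OB ->
    rep O \in max_cyclics (G/N) /\ orbit 'JG (G/N) (rep O) = O.
  move=> O /imsetP[K mK ->]; rewrite /rep; case: pickP => [R RO | /(_ K)]; last first.
    by rewrite orbit_refl.
  by split; [apply: (max_orbit pp eQ ntQ mK RO) | apply/orbit_eqP].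
have injPhi : {in OB &, injective Phi}.
  move=> O1 O2 /repP[m1 e1] /repP[m2 e2] ePhi.
  rewrite -e1 -e2; apply/orbit_eqP.
  have : liftc (rep O1) \in orbit 'JG G (liftc (rep O2)).
    by rewrite /Phi in ePhi; rewrite -ePhi orbit_refl.
  case/imsetP=> g Gg eL.
  have := (liftcP pp eG nNG ntQ m1).2.
  rewrite eL /= quotientJ ?(subsetP (normal_norm nNG)) // (liftcP pp eG nNG ntQ m2).2 => e.
  apply/imsetP; exists (coset N g); first exact: mem_quotient.
  by apply/val_inj; rewrite /= e.
rewrite /eta -/OB -/OG -(card_in_imset injPhi); apply: proper_card; apply/properP; split.
  apply/subsetP=> _ /imsetP[O OBO ->]; have [m _] := repP O OBO.
  exact: imset_f (liftcP pp eG nNG ntQ m).1.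
exists (orbit 'JG G N).
  by apply: imset_f; rewrite inE (maxcycE _ pp) // (normal_sub nNG) cN eqxx.
apply/imsetP=> [[O OBO eN]]; have [m _] := repP O OBO.
have [_ q] := liftcP pp eG nNG ntQ m.
have : liftc (rep O) \in orbit 'JG G N by rewrite eN orbit_refl.
case/imsetP=> g Gg eL; move: q; rewrite eL /= ((normsP (normal_norm nNG)) g Gg).
rewrite trivg_quotient => e1; move: m; rewrite inE (maxcycE _ pp) // -e1 cards1.
by case/andP=> _ /eqP p1; have := prime_gt1 pp; rewrite -p1.
Qed.
Lemma main_ind p : prime p -> forall n gT (G : {group gT}), 2 <= n ->
  #|G| = (p ^ n)%N -> exponent G %| p -> n + p - 1 <= eta G.
Proof.
move=> pp; elim=> [//|n IH] gT G; case: n IH => [//|n] IH _ cG eG.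
case: n IH cG => [|n] IH cG.
  by rewrite add2n subn1 /=; exact: eta_base.
have p1 := prime_gt1 pp.
have pG : p.-group G by rewrite /pgroup cG pnatX pnat_id.
have ntG : G :!=: 1.
  by rewrite trivg_card1 cG; apply: contraTneq (ltn_exp2l 0 n.+3 p1) => ->.
have ntZ : 'Z(G) != 1 by rewrite (center_nil_eq1 (pgroup_nil pG)).
have pZ : p.-group 'Z(G) := pgroupS (center_sub G) pG.
have [_ dZ _] := pgroup_pdiv pZ ntZ.
have [z Zz oz] := Cauchy pp dZ.
have nNG : <[z]>%G <| G by apply: sub_center_normal; rewrite cycle_subG.
have cQ : #|G / <[z]>| = (p ^ n.+2)%N.
  rewrite card_quotient ?normal_norm //.
  have := Lagrange (normal_sub nNG); rewrite cG expnS => h.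
  have cN : #|<[z]>%G| = p := oz.
  by apply/eqP; rewrite -(eqn_pmul2l (prime_gt0 pp)) -h cN.
have ntQ : G / <[z]> != 1.
  by rewrite trivg_card1 cQ; apply: contraTneq (ltn_exp2l 0 n.+2 p1) => ->.
have := eta_quo pp eG nNG oz ntQ.
have := IH _ (G / <[z]>)%G isT cQ (dvdn_trans (exponent_quotient G _) eG).
move=> h1 h2; have := leq_ltn_trans h1 h2; lia.
Qed.

Local Close Scope group_scope.
Unset Implicit Arguments.

Theorem corollary4p5 (gT : finGroupType) (G : {group gT}) (p n : nat) :
  prime p -> 2 <= n -> #|G| = p ^ n -> exponent G = p ->
  n + p - 1 <= eta G.
Proof. by move=> pp n2 cG eG; apply: main_ind; rewrite ?eG. Qed.
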